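(* Let $\mathcal{C}$ be a PL-cograph that takes more than one value. Then $\mathcal{C}$ takes at least three distinct values, and for any distinct points $P,Q$ there is a point $R$ such that $\mathcal{C}(P,Q)$, $\mathcal{C}(P,R)$ and $\mathcal{C}(Q,R)$ are pairwise distinct.
   Context: A cograph is a function $\mathcal{C}$ assigning to each unordered pair $\{P,Q\}$ of distinct elements of a point set a value $\mathcal{C}(P,Q)$ (an edge). A PL-cograph is a cograph satisfying: (1) for distinct points $P,Q,R$, if $\mathcal{C}(P,Q)=\mathcal{C}(Q,R)$ then $\mathcal{C}(P,Q)=\mathcal{C}(P,R)$; (2) for distinct points $P,Q,R,S$, if $\mathcal{C}(P,Q)=\mathcal{C}(R,S)$ then $\mathcal{C}(P,Q)=\mathcal{C}(P,R)=\mathcal{C}(P,S)=\mathcal{C}(Q,R)=\mathcal{C}(Q,S)$. *)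

(* Defs.v *)
(* An assignment on
   unordered pairs {P,Q} of distinct points is represented by a function
   C : T -> T -> V that is symmetric on distinct points; the values C P P
   are irrelevant and never used. *)
Definition cograph {T V : Type} (C : T -> T -> V) : Prop :=
  forall P Q : T, P <> Q -> C P Q = C Q P.

Definition PL_axiom1 {T V : Type} (C : T -> T -> V) : Prop :=
  forall P Q R : T, P <> Q -> P <> R -> Q <> R ->
    C P Q = C Q R -> C P Q = C P R.

Definition PL_axiom2 {T V : Type} (C : T -> T -> V) : Prop :=
  forall P Q R S : T,
    P <> Q -> P <> R -> P <> S -> Q <> R -> Q <> S -> R <> S ->
    C P Q = C R S ->
    C P Q = C P R /\ C P Q = C P S /\ C P Q = C Q R /\ C P Q = C Q S.

Definition PL_cograph {T V : Type} (C : T -> T -> V) : Prop :=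
  cograph C /\ PL_axiom1 C /\ PL_axiom2 C.

Definition takes_more_than_one_value {T V : Type} (C : T -> T -> V) : Prop :=
  exists P Q R S : T, P <> Q /\ R <> S /\ C P Q <> C R S.

Definition takes_at_least_three_values {T V : Type} (C : T -> T -> V) : Prop :=
  exists P1 Q1 P2 Q2 P3 Q3 : T,
    P1 <> Q1 /\ P2 <> Q2 /\ P3 <> Q3 /\
    C P1 Q1 <> C P2 Q2 /\ C P1 Q1 <> C P3 Q3 /\ C P2 Q2 <> C P3 Q3.

(* Main.v *)
Require Import Defs.
From Stdlib Require Import Classical.

Section S.
Variables (T V : Type) (C : T -> T -> V).
Hypothesis Hs : cograph C.
Hypothesis H1 : PL_axiom1 C.

Lemma tri_eq X Y Z : X <> Y -> X <> Z -> Y <> Z -> C X Y = C X Z -> C Y Z = C X Y.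
Proof.
  intros. assert (E : C Y X = C X Y) by (apply Hs; congruence).
  symmetry. rewrite <- E. apply H1; try congruence.
Qed.

Lemma claim P Q : P <> Q -> (exists R S, R <> S /\ C R S <> C P Q) ->
  exists R, R <> P /\ R <> Q /\ (C P R <> C P Q \/ C Q R <> C P Q).
Proof.
  intros HPQ [R [S [HRS HC]]].
  destruct (classic (R = P)) as [->|HRP].
  { exists S. split; [congruence|split; [intro; subst; congruence|left; auto]]. }
  destruct (classic (R = Q)) as [->|HRQ].
  { exists S. split; [intro; subst; apply HC; apply Hs; auto|split; [congruence|right; auto]]. }
  destruct (classic (S = P)) as [->|HSP].
  { exists R. repeat split; auto. left. rewrite Hs; auto. }
  destruct (classic (S = Q)) as [->|HSQ].
  { exists R. repeat split; auto. right. rewrite Hs; auto. }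
  destruct (classic (C P R = C P Q)) as [E1|E1].
  2:{ exists R; auto. }
  destruct (classic (C P S = C P Q)) as [E2|E2].
  2:{ exists S; auto. }
  exfalso. apply HC. rewrite (tri_eq P R S); auto; congruence.
Qed.

Lemma triangle P Q R : P <> Q -> R <> P -> R <> Q ->
  (C P R <> C P Q \/ C Q R <> C P Q) ->
  C P Q <> C P R /\ C P Q <> C Q R /\ C P R <> C Q R.
Proof.
  intros HPQ HRP HRQ HD. repeat split; intro E.
  - pose proof (tri_eq P Q R HPQ (not_eq_sym HRP) (not_eq_sym HRQ) E). destruct HD; congruence.
  - assert (E' : C Q P = C Q R) by (rewrite <- E; apply Hs; auto).
    pose proof (tri_eq Q P R (not_eq_sym HPQ) (not_eq_sym HRQ) (not_eq_sym HRP) E').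
    assert (C Q P = C P Q) by (apply Hs; auto). destruct HD; congruence.
  - assert (E' : C R P = C R Q).
    { rewrite (Hs R P), (Hs R Q); auto. }
    pose proof (tri_eq R P Q HRP HRQ HPQ E').
    assert (C R P = C P R) by (apply Hs; auto). destruct HD; congruence.
Qed.
End S.

Theorem lemma5p1 (T V : Type) (C : T -> T -> V) :
  PL_cograph C -> takes_more_than_one_value C ->
  takes_at_least_three_values C /\
  (forall P Q : T, P <> Q ->
     exists R : T, R <> P /\ R <> Q /\
       C P Q <> C P R /\ C P Q <> C Q R /\ C P R <> C Q R).
Proof.
  intros [Hs [H1 _]] [A [B [D [E [HAB [HDE HC]]]]]].
  assert (K : forall P Q : T, P <> Q ->
     exists R : T, R <> P /\ R <> Q /\
       C P Q <> C P R /\ C P Q <> C Q R /\ C P R <> C Q R).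
  { intros P Q HPQ.
    assert (Ex : exists R S, R <> S /\ C R S <> C P Q).
    { destruct (classic (C A B = C P Q)) as [e|e].
      - exists D, E. split; auto. congruence.
      - exists A, B; auto. }
    destruct (claim T V C Hs H1 P Q HPQ Ex) as [R [HRP [HRQ HD]]].
    exists R. repeat split; auto; apply (triangle T V C Hs H1); auto. }
  split; auto.
  destruct (K A B HAB) as [R [HRP [HRQ [X1 [X2 X3]]]]].
  exists A, B, A, R, B, R. repeat split; auto.
Qed.
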